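(* Let $H$ be a graph with at least one edge, let $0<\delta\leq 1/4$, let $G$ be a $\delta$-dense graph, and let $A,B\subseteq V(G)$ be disjoint independent sets of $G$ such that $|A|\geq |B|\geq 1$, every vertex of $A$ is adjacent to every vertex of $V(G)\setminus A$, and every vertex of $B$ is adjacent to every vertex of $V(G)\setminus B$. Let $G_A$ be obtained from $G$ by deleting one vertex of $A$, and $G_B$ be obtained from $G$ by deleting one vertex of $B$. Then $$\mathrm{inj}(H,G_A)\geq \mathrm{inj}(H,G_B)+2e(H)\,(|A|-|B|)\bigl(1-3\delta\, v(H)^3\bigr)\, v(G)^{v(H)-2}.$$
   Context: $v(G)$ and $e(G)$ denote the numbers of vertices and edges of $G$. A graph $G$ is $\delta$-dense if $\deg(v)\geq (1-\delta)v(G)$ for every $v\in V(G)$. A map $\varphi:V(H)\to V(G)$ is a homomorphism from $H$ to $G$ if $\varphi(u)\varphi(v)\in E(G)$ for every $uv\in E(H)$; $\mathrm{inj}(H,G)$ denotes the number of injective homomorphisms from $H$ to $G$. *)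

(* Defs.v *)
From mathcomp Require Import all_boot all_order all_algebra.
Set Implicit Arguments. Unset Strict Implicit. Unset Printing Implicit Defensive.

Record sgraph := SGraph {
  vert :> finType;
  adj : rel vert;
  adj_sym : symmetric adj;
  adj_irr : irreflexive adj }.

Definition nv (G : sgraph) : nat := #|G|.

Definition edges (G : sgraph) : {set {set G}} :=
  [set S : {set G} | [exists x, exists y, (adj x y) && (S == [set x; y])]].
Definition ne (G : sgraph) : nat := #|edges G|.

Definition deg (G : sgraph) (v : G) : nat := #|[set u : G | adj v u]|.

Definition dense {R : realFieldType} (delta : R) (G : sgraph) : Prop :=
  forall v : G, ((1 - delta) * (nv G)%:R <= (deg v)%:R)%R.

Definition indep (G : sgraph) (A : {set G}) : Prop :=
  forall x y, x \in A -> y \in A -> ~~ adj x y.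

Definition inj (H G : sgraph) : nat :=
  #|[set f : {ffun H -> G} | injectiveb f &&
      [forall u, forall v, adj u v ==> adj (f u) (f v)]]|.

Section Del.
Variables (G : sgraph) (a : G).
Definition del_vert := {x : G | x != a}.
Definition del_adj : rel del_vert := fun x y => adj (val x) (val y).
Lemma del_adj_sym : symmetric del_adj.
Proof. by move=> x y; rewrite /del_adj adj_sym. Qed.
Lemma del_adj_irr : irreflexive del_adj.
Proof. by move=> x; rewrite /del_adj adj_irr. Qed.
Definition del_vertex : sgraph := SGraph del_adj_sym del_adj_irr.
End Del.

(* Main.v *)
From mathcomp Require Import zify.
Require Import Defs.
From mathcomp Require Import all_boot all_order all_algebra.
From mathcomp Require Import ring lra.
Import Order.TTheory GRing.Theory Num.Theory.

Set Implicit Arguments. Unset Strict Implicit. Unset Printing Implicit Defensive.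

Section Gen.
Variables (I T : finType).

Definition Fam (F : I -> {set T}) : {set {ffun I -> T}} :=
  [set f : {ffun I -> T} | [forall i, f i \in F i]].

Lemma card_Fam F : #|Fam F| = \prod_i #|F i|.
Proof.
have -> : #|Fam F| = #|(family (fun i => mem (F i)) : simpl_pred {ffun I -> T})|.
  apply: eq_card => f; rewrite inE; apply/forallP/familyP => Hf x; exact: Hf.
by rewrite card_family foldrE big_map big_enum.
Qed.

Definition upd (F : I -> {set T}) (w : I) (X : {set T}) : I -> {set T} :=
  fun i => if i == w then X else F i.

Lemma prod_upd (F : I -> {set T}) w X :
  (\prod_i #|upd F w X i| * #|F w| = #|X| * \prod_i #|F i|)%N.
Proof.
rewrite (bigD1 w) //= [in RHS](bigD1 w) //= /upd eqxx.
have -> : (\prod_(i | i != w) #|(if i == w then X else F i)| = \prod_(i | i != w) #|F i|)%N.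
  by apply: eq_bigr => i /negbTE ->.
by rewrite mulnAC mulnA.
Qed.

Lemma union_bound (J : finType) (P : pred J) (S : {set T}) (Tf : J -> {set T}) :
  (forall x, x \in S -> exists2 j, P j & x \in Tf j) ->
  (#|S| <= \sum_(j | P j) #|Tf j|)%N.
Proof.
move=> HS.
have -> : (\sum_(j | P j) #|Tf j| = \sum_(j | P j) \sum_x (x \in Tf j))%N.
  by apply: eq_bigr => j _; rewrite -sum1_card big_mkcond /=;
     apply: eq_bigr => x _; case: (x \in Tf j).
rewrite exchange_big /= -sum1_card big_mkcond /=.

apply: (@leq_sum _ _ predT) => x _; case: ifP => // /HS [j Pj xj].
by rewrite (bigD1 j) //= xj.
Qed.

Lemma disj_bound (J : finType) (P : pred J) (S : {set T}) (Tf : J -> {set T}) :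
  (forall j x, P j -> x \in Tf j -> x \in S) ->
  (forall j j' x, P j -> P j' -> x \in Tf j -> x \in Tf j' -> j = j') ->
  (\sum_(j | P j) #|Tf j| <= #|S|)%N.
Proof.
move=> HS Hd.
have -> : (\sum_(j | P j) #|Tf j| = \sum_(j | P j) \sum_x (x \in Tf j))%N.
  by apply: eq_bigr => j _; rewrite -sum1_card big_mkcond /=;
     apply: eq_bigr => x _; case: (x \in Tf j).
rewrite exchange_big /= -sum1_card [in X in (_ <= X)%N]big_mkcond /=.
apply: leq_sum => x _.
case: (pickP [pred j | P j && (x \in Tf j)]) => [j /andP [Pj xj] | none].
  have xS : x \in S := HS j x Pj xj.
  rewrite xS. rewrite (bigD1 j) /=; last exact: Pj. rewrite xj.
  rewrite big1 // => j' /andP [Pj' nj'].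
  case E: (x \in Tf j') => //; case/eqP: nj'; exact: (Hd _ _ x).
rewrite big1 // => j Pj; have := none j; rewrite /= Pj /=.
by move ->.
Qed.

End Gen.

Lemma adj_neq (H : sgraph) (x y : H) : adj x y -> x != y.
Proof. by apply: contraTneq => ->; rewrite adj_irr. Qed.

Lemma ord_edges (H : sgraph) :
  #|[set p : H * H | adj p.1 p.2]| = (2 * ne H)%N.
Proof.
rewrite -sum1_card (partition_big (fun p : H * H => [set p.1; p.2]) (mem (edges H))); last first.
  by move=> [x y]; rewrite !inE /= => Hxy; apply/existsP; exists x; apply/existsP; exists y; rewrite Hxy eqxx.
rewrite /ne -sum1_card big_distrr /=; apply: eq_bigr => S.
rewrite inE => /existsP [x /existsP [y /andP [Hxy /eqP ->]]].
rewrite muln1.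
have -> : (2 = #|[set (x, y); (y, x)]|)%N.
  by rewrite cards2 xpair_eqE (negbTE (adj_neq Hxy)).
rewrite -sum1_card; apply: eq_bigl => [[u v]] /=.
rewrite !inE /=.
rewrite !xpair_eqE.
apply/idP/idP.
  case/andP => Huv /eqP E.
  have uS : u \in [set x; y] by rewrite -E !inE eqxx.
  have vS : v \in [set x; y] by rewrite -E !inE eqxx orbT.
  have := adj_neq Huv.
  move: uS vS; rewrite !inE => /orP [] /eqP -> /orP [] /eqP ->;
    by rewrite ?eqxx ?andbT ?orbT.
case/orP => /andP [/eqP -> /eqP ->]; rewrite ?Hxy //=.
by rewrite adj_sym Hxy /= setUC eqxx.
Qed.

Definition hom (H G : sgraph) (f : {ffun H -> G}) :=
  [forall u, forall v, adj u v ==> adj (f u) (f v)].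

Definition Inj (H G : sgraph) (c : G) : {set {ffun H -> G}} :=
  [set f : {ffun H -> G} | injectiveb f && hom f && [forall x, f x != c]].

Lemma inj_del (H G : sgraph) (a : G) : inj H (del_vertex a) = #|Inj H a|.
Proof.
pose phi (f : {ffun H -> del_vertex a}) : {ffun H -> G} := [ffun x => val (f x)].
have phi_inj : injective phi.
  move=> f g E; apply/ffunP => x; apply: val_inj.
  by have := congr1 (fun h : {ffun H -> G} => h x) E; rewrite /phi !ffunE.
rewrite /inj -(card_imset _ phi_inj); apply: eq_card => g.
rewrite inE; apply/imsetP/idP.
  move=> [f]; rewrite inE => /andP [/injectiveP fi /forallP fh] ->.
  apply/andP; split; [apply/andP; split|].
  - apply/injectiveP => x y; rewrite !ffunE => E; apply: fi; exact: val_inj.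
  - apply/forallP => u; apply/forallP => v; rewrite !ffunE.
    by have /forallP := fh u; move/(_ v).
  - by apply/forallP => x; rewrite ffunE; exact: (valP (f x)).
case/andP => /andP [/injectiveP gi /forallP gh] /forallP ga.
exists [ffun x => (Sub (g x) (ga x) : del_vertex a)]; last first.
  by apply/ffunP => x; rewrite !ffunE.
rewrite inE; apply/andP; split.
  apply/injectiveP => x y; rewrite !ffunE => E; apply: gi.
  by have := congr1 val E.
apply/forallP => u; apply/forallP => v; rewrite !ffunE.
by have /forallP := gh u; move/(_ v).
Qed.

Section RealAux.
Variable R : realFieldType.
Local Open Scope ring_scope.

Lemma sum_le_set (I : finType) (P : pred I) (Q : {set I}) (F : I -> R) K :
  (forall i, P i -> i \in Q) -> (forall i, P i -> F i <= K) -> 0 <= K ->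
  \sum_(i | P i) F i <= K * (#|Q|)%:R.
Proof.
move=> HQ HF K0.
apply: le_trans (_ : \sum_(i | P i) K <= _); first by apply: ler_sum.
rewrite mulr_natr -sumr_const big_mkcond [X in _ <= X]big_mkcond /=.
apply: ler_sum => i _; case: ifP => Pi; first by rewrite (HQ i Pi).
by case: ifP.
Qed.

Lemma bern (x : R) (m : nat) : 0 <= x -> x <= 1 -> 1 - m%:R * x <= (1 - x) ^+ m.
Proof.
move=> x0 x1; elim: m => [|m IH]; first by rewrite mul0r subr0 expr0.
rewrite exprS -natr1.
have h1 : 0 <= 1 - x by lra.
have := ler_wpM2l h1 IH.
have hm : 0 <= m%:R * (x * x) :> R by rewrite mulr_ge0 // mulr_ge0.
move: ((1 - x) ^+ m) => y; rewrite mulrDl mul1r.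
nra.
Qed.

End RealAux.


Section Main.
Variables (G : sgraph) (A B : {set G}) (a b : G).
Hypotheses (dAB : [disjoint A & B]) (iA : indep A) (iB : indep B)
  (cA : forall x y, x \in A -> y \notin A -> adj x y)
  (cB : forall x y, x \in B -> y \notin B -> adj x y)
  (aA : a \in A) (bB : b \in B) (leBA : (#|B| <= #|A|)%N).

Lemma adjA x y : x \in A -> adj x y = (y \notin A).
Proof.
move=> xA; case yA: (y \in A) => /=.
  by apply/negbTE; apply: iA.
by apply: cA => //; rewrite yA.
Qed.

Lemma adjB x y : x \in B -> adj x y = (y \notin B).
Proof.
move=> xB; case yB: (y \in B) => /=.
  by apply/negbTE; apply: iB.
by apply: cB => //; rewrite yB.
Qed.

Lemma AnB x : x \in A -> x \notin B.
Proof. by move=> xA; apply/negP => xB; have := disjointFr dAB xA; rewrite xB. Qed.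

Lemma BnA x : x \in B -> x \notin A.
Proof. by move=> xB; apply/negP => /AnB; rewrite xB. Qed.

Definition sA := a :: enum (A :\ a).
Definition sB := b :: enum (B :\ b).
Definition k := size sB.
Definition T := take k sA.
Definition D := drop k sA.
Definition R : {set G} := [set x in D].

Lemma mem_sA x : (x \in sA) = (x \in A).
Proof.
rewrite /sA in_cons mem_enum in_setD1; case: (eqVneq x a) => [->|] //=.
Qed.

Lemma mem_sB x : (x \in sB) = (x \in B).
Proof.
rewrite /sB in_cons mem_enum in_setD1; case: (eqVneq x b) => [->|] //=.
Qed.

Lemma uniq_sA : uniq sA.
Proof. by rewrite /sA /= enum_uniq mem_enum setD11. Qed.

Lemma uniq_sB : uniq sB.
Proof. by rewrite /sB /= enum_uniq mem_enum setD11. Qed.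

Lemma size_sA : size sA = #|A|.
Proof. by rewrite /sA /= -cardE (cardsD1 a A) aA. Qed.

Lemma size_sB : k = #|B|.
Proof. by rewrite /k /sB /= -cardE (cardsD1 b B) bB. Qed.

Lemma k_le : (k <= size sA)%N.
Proof. by rewrite size_sA size_sB. Qed.

Lemma sA_cat : sA = T ++ D.
Proof. by rewrite cat_take_drop. Qed.

Lemma size_T : size T = k.
Proof. by rewrite /T size_takel // k_le. Qed.

Lemma T_index x : x \in T -> (index x sA < k)%N.
Proof. by move=> xT; rewrite sA_cat index_cat xT -size_T index_mem. Qed.

Lemma nth_T x0 i : (i < k)%N -> nth x0 sA i \in T.
Proof. by move=> ik; rewrite /T -(nth_take _ ik) mem_nth // size_T. Qed.

Lemma T_A x : x \in T -> x \in A.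
Proof. by rewrite -mem_sA => /mem_take. Qed.

Lemma D_A x : x \in D -> x \in A.
Proof. by rewrite -mem_sA => /mem_drop. Qed.

Lemma TnD x : x \in T -> x \notin D.
Proof.
move=> xT; have := uniq_sA; rewrite sA_cat cat_uniq => /and3P [_ /hasPn H _].
by apply/negP => xD; have := H x xD; rewrite xT.
Qed.

Lemma A_TD x : x \in A -> (x \in T) || (x \in D).
Proof. by rewrite -mem_sA sA_cat mem_cat. Qed.

Definition pi (x : G) : G :=
  if x \in sB then nth x sA (index x sB)
  else if x \in T then nth x sB (index x sA) else x.

Lemma k_gt0 : (0 < k)%N. Proof. by []. Qed.

Lemma piB x : x \in B -> pi x \in T.
Proof.
by rewrite /pi -mem_sB => xB; rewrite xB; apply: nth_T; rewrite index_mem.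
Qed.

Lemma piT x : x \in T -> pi x \in B.
Proof.
move=> xT; have := AnB (T_A xT); rewrite -mem_sB /pi => /negbTE ->; rewrite xT.
by rewrite -mem_sB mem_nth // T_index.
Qed.

Lemma piK : involutive pi.
Proof.
move=> x; case xB: (x \in B).
  have yT := piB xB; have yB := AnB (T_A yT).
  have E1 : pi (pi x) = nth (pi x) sB (index (pi x) sA).
    by rewrite {1}/pi mem_sB (negbTE yB) yT.
  have E2 : pi x = nth x sA (index x sB) by rewrite /pi mem_sB xB.
  rewrite E1 {2}E2 index_uniq; last exact: uniq_sA.
    by rewrite nth_index // mem_sB.
  by rewrite (leq_trans _ k_le) // index_mem mem_sB.
case xT: (x \in T).
  have yB := piT xT.
  have E1 : pi (pi x) = nth (pi x) sA (index (pi x) sB).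
    by rewrite {1}/pi mem_sB yB.
  have E2 : pi x = nth x sB (index x sA) by rewrite /pi mem_sB xB xT.
  rewrite E1 {2}E2 index_uniq ?uniq_sB ?T_index //.
  by rewrite E2 nth_index // mem_sA T_A.
have E : pi x = x by rewrite /pi mem_sB xB xT.
by rewrite E E.
Qed.

Lemma aT : a \in T.
Proof. by rewrite /T /sA /k /sB /= in_cons eqxx. Qed.

Lemma pi_a : pi a = b.
Proof.
rewrite /pi mem_sB (negbTE (AnB aA)) aT /sA /= eqxx /=.
by rewrite /sB.
Qed.

Lemma pi_b : pi b = a.
Proof. by rewrite -pi_a piK. Qed.

Lemma pi_fix x : x \notin B -> x \notin T -> pi x = x.
Proof. by rewrite /pi mem_sB => /negbTE -> /negbTE ->. Qed.

Lemma R_A x : x \in R -> x \in A.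
Proof. by rewrite inE => /D_A. Qed.

Lemma piR x : x \in R -> pi x = x.
Proof.
move=> xR; apply: pi_fix; first by apply: AnB; apply: R_A.
by apply/negP => /TnD; rewrite inE in xR; rewrite xR.
Qed.

Lemma a_notR : a \notin R.
Proof. by rewrite inE; apply: TnD aT. Qed.

Lemma b_notR : b \notin R.
Proof. by apply/negP => /R_A /AnB; rewrite bB. Qed.

Lemma card_R : #|R| = (#|A| - #|B|)%N.
Proof.
have uD : uniq D by rewrite /D drop_uniq // uniq_sA.
rewrite cardsE (card_uniqP uD) /D size_drop size_sA size_sB //.
Qed.

Lemma KA y : y \notin R -> (pi y \in B) = (y \in A).
Proof.
move=> yR; case yA: (y \in A).
  have : (y \in T) || (y \in D) := A_TD yA.
  case/orP => [yT|yD]; first exact: piT.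
  by rewrite inE yD in yR.
case yB: (y \in B); first by apply/negbTE/AnB/T_A/piB.
by rewrite pi_fix ?yB //; apply/negP => /T_A; rewrite yA.
Qed.

Lemma KB y : y \notin R -> (pi y \in A) = (y \in B).
Proof.
move=> yR; case yB: (y \in B); first by apply/T_A/piB.
case yA: (y \in A).
  have : (y \in T) || (y \in D) := A_TD yA.
  case/orP => [yT|yD]; first by apply/negbTE/BnA/piT.
  by rewrite inE yD in yR.
by rewrite pi_fix ?yB //; apply/negP => /T_A; rewrite yA.
Qed.

Lemma pi_adj x y : x \notin R -> y \notin R -> adj (pi x) (pi y) = adj x y.
Proof.
have main : forall x y, x \notin R -> y \notin R -> (x \in A) || (x \in B) ->
    adj (pi x) (pi y) = adj x y.
  move=> u v uR vR /orP [uA|uB].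
    have puB : pi u \in B.
      have : (u \in T) || (u \in D) := A_TD uA.
      by case/orP => [uT|uD]; [apply: piT | rewrite inE uD in uR].
    by rewrite (adjA v uA) (adjB _ puB) KA.
  have puA : pi u \in A by apply/T_A/piB.
  by rewrite (adjB v uB) (adjA _ puA) KB.
move=> xR yR; case xAB: ((x \in A) || (x \in B)); first exact: main.
case yAB: ((y \in A) || (y \in B)).
  by rewrite adj_sym [in RHS]adj_sym; apply: main.
move/negbT: xAB; rewrite negb_or => /andP [xA xB].
move/negbT: yAB; rewrite negb_or => /andP [yA yB].
have yT : y \notin T by apply/negP => /T_A; rewrite (negbTE yA).
have xT : x \notin T by apply/negP => /T_A; rewrite (negbTE xA).
by rewrite !pi_fix.
Qed.



Variable H : sgraph.

Definition theta (x : G) : G := if x == a then b else if x == b then a else x.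

Lemma ab_neq : a != b.
Proof. by apply/negP => /eqP E; have := AnB aA; rewrite E bB. Qed.

Lemma thetaK : involutive theta.
Proof.
move=> x; rewrite /theta; case: (eqVneq x a) => [->|xa].
  by rewrite eq_sym (negbTE ab_neq) eqxx.
case: (eqVneq x b) => [->|xb]; first by rewrite eqxx.
by rewrite (negbTE xa) (negbTE xb).
Qed.

Definition comp (p : G -> G) (f : {ffun H -> G}) : {ffun H -> G} := [ffun x => p (f x)].

Lemma card_inv (p : G -> G) (S1 S2 : {set {ffun H -> G}}) :
  involutive p ->
  (forall f, f \in S1 -> comp p f \in S2) ->
  (forall f, f \in S2 -> comp p f \in S1) -> #|S1| = #|S2|.
Proof.
move=> pK h12 h21.
have ci : injective (comp p).
  move=> f g E; apply/ffunP => x.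
  have := congr1 (fun h : {ffun H -> G} => h x) E; rewrite !ffunE.
  by move/(congr1 p); rewrite !pK.
apply/eqP; rewrite eqn_leq; apply/andP; split.
  rewrite -(card_imset _ ci); apply: subset_leq_card.
  by apply/subsetP => g /imsetP [f fS ->]; apply: h12.
rewrite -(card_imset _ ci); apply: subset_leq_card.
by apply/subsetP => g /imsetP [f fS ->]; apply: h21.
Qed.

Definition MR : {set {ffun H -> G}} := [set f : {ffun H -> G} | [exists x, f x \in R]].
Definition Av (c : G) : {set {ffun H -> G}} := [set f : {ffun H -> G} | [forall x, f x != c]].
Definition XA := (Inj H a :&: MR) :\: Av b.
Definition XB := (Inj H b :&: MR) :\: Av a.
Definition Y : {set {ffun H -> G}} := [set g : {ffun H -> G} | comp theta g \in XB].

Lemma inj_comp (p : G -> G) f : involutive p -> injectiveb (comp p f) = injectiveb f.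
Proof.
move=> pK; apply/injectiveP/injectiveP => fi x y.
  by move=> E; apply: fi; rewrite !ffunE E.
by rewrite !ffunE => /(congr1 p); rewrite !pK => /fi.
Qed.

Lemma pi_part : #|Inj H a :\: MR| = #|Inj H b :\: MR|.
Proof.
have key : forall c1 c2 : G, pi c1 = c2 -> forall f : {ffun H -> G}, f \in Inj H c1 :\: MR ->
    comp pi f \in Inj H c2 :\: MR.
  move=> c1 c2 E f; rewrite !inE => /andP [nm /andP [/andP [fi fh] fa]].
  have fR : forall x, f x \notin R.
    by move=> x; apply/negP => fxR; move: nm; rewrite negb_exists => /forallP /(_ x); rewrite fxR.
  apply/andP; split.
    rewrite negb_exists; apply/forallP => x; rewrite ffunE.
    apply/negP => H1; have := piR H1; rewrite piK => E'.
    by move: (fR x); rewrite E' H1.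
  rewrite inj_comp ?fi; last exact: piK.
  apply/andP; split.
    apply/forallP => u; apply/forallP => v; rewrite !ffunE pi_adj ?fR //.
    by move: fh => /forallP /(_ u) /forallP /(_ v).
  apply/forallP => x; rewrite ffunE; apply/negP => /eqP E2.
  have E3 : f x = c1 by rewrite -[f x]piK E2 -E piK.
  by move: fa => /forallP /(_ x); rewrite E3 eqxx.
apply: (card_inv piK); apply: key; [exact: pi_a | exact: pi_b].
Qed.

Lemma compK (p : G -> G) f : involutive p -> comp p (comp p f) = f.
Proof. by move=> pK; apply/ffunP => x; rewrite !ffunE pK. Qed.

Lemma diff_id : (#|Inj H a| + #|Y :\: XA| = #|Inj H b| + #|XA :\: Y|)%N.
Proof.
have e1 := cardsID MR (Inj H a).
have e2 := cardsID (Av b) (Inj H a :&: MR).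
have e1' := cardsID MR (Inj H b).
have e2' := cardsID (Av a) (Inj H b :&: MR).
have mid : (Inj H a :&: MR) :&: Av b = (Inj H b :&: MR) :&: Av a.
  apply/setP => f; rewrite !inE.
  by case: (injectiveb f); case: (hom f); case: [forall x, f x != a];
    case: [forall x, f x != b]; case: [exists x, f x \in R].
have eY : #|Y| = #|XB|.
  apply: (card_inv thetaK) => f; first by rewrite inE.
  by move=> fX; rewrite inE compK //; exact: thetaK.
have e3 := cardsID XA Y.
have e4 := cardsID Y XA.
rewrite setIC in e4.
rewrite -e1 -e1' pi_part -e2 -e2' mid -/XA -/XB -eY -e4 -e3.
lia.
Qed.

Definition C : {set G} := ~: (A :|: B).

Lemma FamP (F : H -> {set G}) (f : {ffun H -> G}) : reflect (forall i, f i \in F i) (f \in Fam F).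
Proof. by rewrite inE; apply: forallP. Qed.

Definition Fp (u z : H) : H -> {set G} := upd (upd (fun _ => C) u [set b]) z R.
Definition Fset u z := Fam (Fp u z).
Definition Eset u z := [set f in Fset u z | injectiveb f && hom f].
Definition Dset u z (w : H * H) := [set f in Fset u z | ~~ adj (f w.1) (f w.2)].
Definition Tset (q : (H * H) * H) :=
  Fam (upd (upd (upd (fun _ => setT) q.1.1 [set b]) q.1.2 (B :\ b)) q.2 R).

Lemma Fp_u u z : u != z -> Fp u z u = [set b].
Proof. by move=> uz; rewrite /Fp /upd (negbTE uz) eqxx. Qed.
Lemma Fp_z u z : Fp u z z = R.
Proof. by rewrite /Fp /upd eqxx. Qed.
Lemma Fp_o u z i : i != u -> i != z -> Fp u z i = C.
Proof. by move=> iu iz; rewrite /Fp /upd (negbTE iu) (negbTE iz). Qed.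

Lemma F_vals u z (f : {ffun H -> G}) : u != z -> f \in Fset u z ->
  [/\ f u = b, f z \in R & forall i, i != u -> i != z -> f i \in C].
Proof.
move=> uz /FamP Hf; split.
- by have := Hf u; rewrite Fp_u // inE => /eqP.
- by have := Hf z; rewrite Fp_z.
- by move=> i iu iz; have := Hf i; rewrite Fp_o.
Qed.

Lemma R_notB x : x \in R -> x \notin B.
Proof. by move/R_A/AnB. Qed.
Lemma C_notA x : x \in C -> x \notin A.
Proof. by rewrite !inE negb_or => /andP []. Qed.
Lemma C_notB x : x \in C -> x \notin B.
Proof. by rewrite !inE negb_or => /andP []. Qed.
Lemma b_notC : b \notin C.
Proof. by rewrite !inE bB orbT. Qed.
Lemma a_notC : a \notin C.
Proof. by rewrite !inE aA. Qed.
Lemma R_notC x : x \in R -> x \notin C.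
Proof. by move/R_A => xA; rewrite !inE xA. Qed.

Lemma Fadj u z (f : {ffun H -> G}) x y : u != z -> f \in Fset u z -> x != y ->
  (x == u) || (x == z) -> adj (f x) (f y).
Proof.
move=> uz fF xy; have [fu fz fo] := F_vals uz fF.
case/orP => /eqP E; subst x.
  rewrite fu adjB //.
  case: (eqVneq y z) => [->|yz]; first exact: R_notB.
  by apply: C_notB; apply: fo => //; rewrite eq_sym.
have fzA := R_A fz; rewrite adjA //.
case: (eqVneq y u) => [->|yu]; first by rewrite fu; apply: BnA.
by apply: C_notA; apply: fo => //; rewrite eq_sym.
Qed.
Lemma theta_a : theta a = b. Proof. by rewrite /theta eqxx. Qed.
Lemma theta_b : theta b = a.
Proof. by rewrite /theta eq_sym (negbTE ab_neq) eqxx. Qed.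
Lemma theta_fix x : x != a -> x != b -> theta x = x.
Proof. by move=> xa xb; rewrite /theta (negbTE xa) (negbTE xb). Qed.

Lemma neq_of_notin (x y : G) (S : {set G}) : x \in S -> y \notin S -> x != y.
Proof. by move=> xS; apply: contraNneq => <-. Qed.

Lemma E_sub u z (f : {ffun H -> G}) : adj u z -> f \in Eset u z -> f \in XA :\: Y.
Proof.
move=> uz; rewrite inE => /andP [fF /andP [fi fh]].
have uz' := adj_neq uz.
have [fu fz fo] := F_vals uz' fF.
have fa : forall x, f x != a.
  move=> x; case: (eqVneq x u) => [->|xu]; first by rewrite fu eq_sym ab_neq.
  case: (eqVneq x z) => [->|xz]; first exact: (neq_of_notin fz a_notR).
  exact: (neq_of_notin (fo _ xu xz) a_notC).
rewrite !inE negb_and negbK.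
apply/and4P; split.
- apply/orP; right; apply/negP => /andP [/andP [/andP [_ th] _] _].
  move: th => /forallP /(_ u) /forallP /(_ z); rewrite uz /= !ffunE fu theta_b.
  rewrite theta_fix; last first.
  + exact: (neq_of_notin fz b_notR).
  + exact: (neq_of_notin fz a_notR).
  by rewrite adjA // (R_A fz).
- by rewrite negb_forall; apply/existsP; exists u; rewrite fu eqxx.
- by rewrite fi fh /=; apply/forallP.
- by apply/existsP; exists z.
Qed.

Lemma E_disj u z u' z' (f : {ffun H -> G}) : adj u z -> adj u' z' ->
  f \in Eset u z -> f \in Eset u' z' -> (u, z) = (u', z').
Proof.
move=> uz uz' /setIdP [fF _] /setIdP [fF' _].
have [fu fz fo] := F_vals (adj_neq uz) fF.
have [fu' fz' fo'] := F_vals (adj_neq uz') fF'.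
have eu : u = u'.
  apply/eqP; apply/negP => /negP nu.
  case: (eqVneq u z') => [E|nz].
    by move: fz'; rewrite -E fu => /R_A/AnB; rewrite bB.
  by move: (fo' _ nu nz); rewrite fu (negbTE b_notC).
subst u'.
have ez : z = z'.
  apply/eqP; apply/negP => /negP nz.
  case: (eqVneq z u) => [E|nu].
    by move: (adj_neq uz); rewrite E eqxx.
  by move: (fo' _ nu nz); rewrite (negbTE (R_notC fz)).
by rewrite ez.
Qed.

Definition goodw (u z : H) (w : H * H) :=
  [&& w.1 != w.2, w.1 != u, w.1 != z, w.2 != u & w.2 != z].

Lemma F_bad u z (f : {ffun H -> G}) : u != z -> f \in Fset u z -> f \notin Eset u z ->
  exists2 w, goodw u z w & f \in Dset u z w.
Proof.
move=> uz fF fE.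
have key : forall x y, x != y -> ~~ adj (f x) (f y) -> goodw u z (x, y).
  move=> x y xy nadj; rewrite /goodw /= xy /=.
  case xuz: ((x == u) || (x == z)).
    by move: nadj; rewrite (Fadj uz fF xy xuz).
  case yuz: ((y == u) || (y == z)).
    by move: nadj; rewrite adj_sym (Fadj uz fF _ yuz) // eq_sym.
  by move: xuz yuz; case: (x == u); case: (x == z); case: (y == u); case: (y == z).
have [x [y [xy nadj]]] : exists x y, x != y /\ ~~ adj (f x) (f y).
  move: fE; rewrite inE fF /= negb_and => /orP [/injectivePn [x [y xy E]] | nh].
    by exists x, y; split => //; rewrite E adj_irr.
  move: nh; rewrite negb_forall => /existsP [x]; rewrite negb_forall => /existsP [y].
  rewrite negb_imply => /andP [xy nadj]; exists x, y; split => //; exact: adj_neq.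
exists (x, y); first exact: key.
by rewrite inE fF.
Qed.

Lemma Y_bad (g : {ffun H -> G}) : g \in Y :\: XA ->
  exists2 q : (H * H) * H, [&& adj q.1.1 q.1.2, q.2 != q.1.1 & q.2 != q.1.2] & g \in Tset q.
Proof.
rewrite !inE => /andP [nXA].
rewrite inj_comp; last exact: thetaK.
move=> /and3P [ga' /andP [/andP [gi th] gb'] gR'].
have ga : forall x, g x != a.
  move=> x; move: gb' => /forallP /(_ x); rewrite ffunE.
  by apply: contra => /eqP ->; rewrite theta_a.
have [u gu] : exists u, g u = b.
  move: ga'; rewrite negb_forall => /existsP [u]; rewrite negbK ffunE => /eqP E.
  by exists u; rewrite -[g u]thetaK E theta_a.
have [y gy] : exists y, g y \in R.
  move: gR' => /existsP [y]; rewrite ffunE => yR; exists y.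
  case: (eqVneq (g y) a) => [E|na]; first by move: yR; rewrite E theta_a (negbTE b_notR).
  case: (eqVneq (g y) b) => [E|nb]; first by move: yR; rewrite E theta_b (negbTE a_notR).
  by rewrite -(theta_fix na nb).
have nh : ~~ hom g.
  apply: contra nXA => gh; rewrite gi gh /=; apply/and3P; split.
  - by rewrite negb_forall; apply/existsP; exists u; rewrite gu eqxx.
  - by apply/forallP.
  - by apply/existsP; exists y.
move: nh; rewrite negb_forall => /existsP [x]; rewrite negb_forall => /existsP [v].
rewrite negb_imply => /andP [xv nadj].
have tadj : adj (theta (g x)) (theta (g v)).
  by move: th => /forallP /(_ x) /forallP /(_ v); rewrite xv !ffunE.
have ginj : injective g by apply/injectiveP.
(* one of g x, g v is b *)
have main : forall p q, adj p q -> ~~ adj (g p) (g q) -> adj (theta (g p)) (theta (g q)) ->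
    g p = b -> g q \in B :\ b.
  move=> p q pq npq tpq gp.
  have gqb : g q != b.
    by apply/eqP => E; move: (adj_neq pq); rewrite -(ginj p q) ?eqxx // gp E.
  move: tpq; rewrite gp theta_b theta_fix // adjA // => gqA.
  by rewrite !inE gqb /=; move: npq; rewrite gp adjB // negbK.
have yne : forall p, g p \in B -> y != p.
  by move=> p gp; apply/eqP => E; move: gy; rewrite E => /R_notB; rewrite gp.
case: (eqVneq (g x) b) => [gx|gxb].
  have gvB := main _ _ xv nadj tadj gx.
  exists ((x, v), y); last first.
    apply/FamP => i; rewrite /upd /=.
    case: eqP => [->|_] //; case: eqP => [->|_] //; case: eqP => [->|_]; last by rewrite inE.
    by rewrite gx inE.
  rewrite /= xv /= (yne x) ?gx //; apply: yne; by move: gvB; rewrite !inE => /andP [].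
case: (eqVneq (g v) b) => [gv|gvb].
  have gxB' : g x \in B :\ b.
    apply: (main v x) => //; by rewrite adj_sym.

  exists ((v, x), y); last first.
    apply/FamP => i; rewrite /upd /=.
    case: eqP => [->|_] //; case: eqP => [->|_] //; case: eqP => [->|_]; last by rewrite inE.
    by rewrite gv inE.
  rewrite /= adj_sym xv /= (yne v) ?gv //; apply: yne; by move: gxB'; rewrite !inE => /andP [].
by move: nadj; rewrite -(theta_fix (ga x) gxb) -(theta_fix (ga v) gvb) tadj.
Qed.

Lemma prod_const (k0 : nat) : (\prod_(i : H) k0 = k0 ^ #|H|)%N.
Proof. by rewrite prod_nat_const. Qed.

Lemma cardF u z : u != z -> (#|Fset u z| * #|C| * #|C| = #|R| * #|C| ^ #|H|)%N.
Proof.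
move=> uz; rewrite /Fset card_Fam /Fp.
set base := fun _ : H => C.
have e1 := prod_upd (upd base u [set b]) z R.
have e2 := prod_upd base u [set b].
have h1 : upd base u [set b] z = C by rewrite /upd eq_sym (negbTE uz).
rewrite h1 in e1.
rewrite e1 -mulnA.
have e2' : (\prod_i #|upd base u [set b] i| * #|C| = #|[set b]| * \prod_i #|base i|)%N := e2.
by rewrite e2' cards1 mul1n /base prod_const.
Qed.

Definition Fq u z (w : H * H) (q : G * G) :=
  Fam (upd (upd (Fp u z) w.1 [set q.1]) w.2 [set q.2]).

Lemma cardD u z w q : u != z -> goodw u z w ->
  (#|Fq u z w q| * #|C| * #|C| = #|Fset u z|)%N.
Proof.
move=> uz /and5P [w12 w1u w1z w2u w2z].
rewrite /Fq /Fset !card_Fam.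
have e1 := prod_upd (upd (Fp u z) w.1 [set q.1]) w.2 [set q.2].
have e2 := prod_upd (Fp u z) w.1 [set q.1].
have h1 : upd (Fp u z) w.1 [set q.1] w.2 = C by rewrite /upd eq_sym (negbTE w12) Fp_o.
have h2 : Fp u z w.1 = C by rewrite Fp_o.
rewrite h1 in e1; rewrite h2 in e2.
by rewrite e1 cards1 mul1n e2 cards1 mul1n.
Qed.

Lemma cardT (q : (H * H) * H) : q.1.1 != q.1.2 -> q.2 != q.1.1 -> q.2 != q.1.2 ->
  (#|Tset q| * #|G| * #|G| * #|G| = #|B :\ b| * #|R| * #|G| ^ #|H|)%N.
Proof.
move=> uz yu yz; rewrite /Tset !card_Fam.
set L0 := fun _ : H => [set: G].
set L1 := upd L0 q.1.1 [set b].
set L2 := upd L1 q.1.2 (B :\ b).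
have e3 := prod_upd L2 q.2 R.
have e2 := prod_upd L1 q.1.2 (B :\ b).
have e1 := prod_upd L0 q.1.1 [set b].
have h3 : L2 q.2 = [set: G] by rewrite /L2 /L1 /upd (negbTE yu) (negbTE yz).
have h2 : L1 q.1.2 = [set: G] by rewrite /L1 /upd eq_sym (negbTE uz).
have h1 : L0 q.1.1 = [set: G] by [].
rewrite h3 cardsT in e3; rewrite h2 cardsT in e2; rewrite h1 cardsT in e1.
rewrite e3 -(mulnA #|R|) e2 -(mulnA #|R|) -(mulnA #|B :\ b|) e1.
by rewrite cards1 mul1n prod_const mulnCA mulnA.
Qed.

Definition NA : {set G * G} :=
  [set q : G * G | (q.1 \in C) && (q.2 \in C) && ~~ adj q.1 q.2].

Lemma D_le u z w : u != z -> goodw u z w ->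
  (#|Dset u z w| * #|C| * #|C| <= #|NA| * #|Fset u z|)%N.
Proof.
move=> uz gw.
have ub : (#|Dset u z w| <= \sum_(q in NA) #|Fq u z w q|)%N.
  apply: union_bound => f; rewrite inE => /andP [fF nadj].
  move: (gw) => /and5P [w12 w1u w1z w2u w2z].
  have [fu fz fo] := F_vals uz fF.
  exists (f w.1, f w.2); first by rewrite inE /= !fo.
  apply/FamP => i; rewrite /upd /=.
  case: eqP => [->|_]; first by rewrite inE.
  case: eqP => [->|_]; first by rewrite inE.
  by move: fF => /FamP.
rewrite -mulnA (leq_trans (leq_mul ub (leqnn _))) //.
rewrite big_distrl /= (eq_bigr (fun _ => #|Fset u z|)); last first.
  by move=> q _; rewrite mulnA cardD.
by rewrite sum_nat_const.
Qed.

Lemma NA_le : (#|NA| <= \sum_(x in C) #|[set y | ~~ adj x y]|)%N.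
Proof.
have -> : (\sum_(x in C) #|[set y | ~~ adj x y]| =
   \sum_(x in C) #|(pair x) @: [set y | ~~ adj x y]|)%N.
  apply: eq_bigr => x _; rewrite card_imset //; move=> y1 y2 [].
  done.
apply: union_bound => q; rewrite inE => /andP [/andP [q1 q2] nadj].
exists q.1 => //; apply/imsetP; exists q.2; first by rewrite inE.
by case: q {q1 q2 nadj}.
Qed.

Lemma F_le u z : u != z ->
  (#|Fset u z| <= #|Eset u z| + \sum_(w | goodw u z w) #|Dset u z w|)%N.
Proof.
move=> uz; rewrite -(cardsID (Eset u z) (Fset u z)) leq_add //.
  by apply: subset_leq_card; apply/subsetP => f; rewrite inE => /andP [].
apply: union_bound => f; rewrite inE => /andP [fE fF].
by apply: F_bad.
Qed.

Definition Pset : {set H * H} := [set p : H * H | adj p.1 p.2].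

Lemma E_le : (\sum_(p in Pset) #|Eset p.1 p.2| <= #|XA :\: Y|)%N.
Proof.
apply: disj_bound.
  by move=> p f; rewrite inE => pa; apply: E_sub.
move=> p p' f pa pa' fE fE'; rewrite inE in pa; rewrite inE in pa'.
by have := E_disj pa pa' fE fE'; case: p {pa fE} => ??; case: p' {pa' fE'} => ??.
Qed.

Lemma Y_le : (#|Y :\: XA| <=
   \sum_(q | [&& adj q.1.1 q.1.2, q.2 != q.1.1 & q.2 != q.1.2]) #|Tset q|)%N.
Proof. by apply: union_bound => g; apply: Y_bad. Qed.

Section Final.
Local Open Scope ring_scope.
Variables (RR : realFieldType) (delta : RR).
Hypotheses (he : (1 <= ne H)%N) (d0 : 0 < delta) (d4 : delta <= 1 / 4)
  (dG : dense delta G) (b1 : (1 <= #|B|)%N).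

Let n : RR := (#|G|)%:R.

Lemma d4' : delta * 4 <= 1.
Proof. by rewrite -ler_pdivlMr. Qed.

Lemma nonadj_le (x : G) : (#|[set y | ~~ adj x y]|)%:R <= delta * n.
Proof.
have := dG x; rewrite /deg /nv -/n.
have e := cardsC [set y | adj x y].
have E : ~: [set y | adj x y] = [set y | ~~ adj x y] by apply/setP => y; rewrite !inE.
rewrite E in e; move: e => /(congr1 (fun k : nat => k%:R : RR)); rewrite natrD -/n => e.
lra.
Qed.

Lemma cardA_le : (#|A|)%:R <= delta * n.
Proof.
have -> : A = [set y | ~~ adj a y] by apply/setP => y; rewrite inE adjA // negbK.
exact: nonadj_le.
Qed.

Lemma cardB_le : (#|B|)%:R <= delta * n.
Proof.
have -> : B = [set y | ~~ adj b y] by apply/setP => y; rewrite inE adjB // negbK.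
exact: nonadj_le.
Qed.

Lemma cardC_eq : (#|C|)%:R = n - (#|A|)%:R - (#|B|)%:R.
Proof.
have e := cardsC (A :|: B).
have e2 := cardsU A B.
have e3 : A :&: B = set0 by apply/disjoint_setI0.
rewrite e3 cards0 subn0 in e2.
rewrite /C /n -e e2 natrD natrD; lra.
Qed.

Lemma n_pos : 0 < n.
Proof. by rewrite /n ltr0n; apply/card_gt0P; exists a. Qed.

Lemma c_ge : (1 - 2 * delta) * n <= (#|C|)%:R.
Proof. rewrite cardC_eq; have := cardA_le; have := cardB_le; lra. Qed.

Lemma c_pos : 0 < (#|C|)%:R :> RR.
Proof.
have h : 0 < (1 - 2 * delta) * n by apply: mulr_gt0; [have := d4'; lra | exact: n_pos].
have := c_ge; lra.
Qed.

End Final.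

Section Final2.
Local Open Scope ring_scope.
Variables (RR : realFieldType) (delta : RR).
Hypotheses (he : (1 <= ne H)%N) (d0 : 0 < delta) (d4 : delta <= 1 / 4)
  (dG : dense delta G) (b1 : (1 <= #|B|)%N).

Let n : RR := (#|G|)%:R.
Let c : RR := (#|C|)%:R.
Let t : RR := (#|R|)%:R.
Let m := (#|H| - 2)%N.

Lemma h_ge2 : (2 <= #|H|)%N.
Proof.
have := ord_edges H; rewrite -/Pset => e.
have : (0 < #|Pset|)%N by rewrite e muln_gt0 he.
case/card_gt0P => p; rewrite inE => /adj_neq pn.
have := cards2 p.1 p.2; rewrite pn => <-; exact: max_card.
Qed.

Lemma hm : #|H| = (m + 2)%N.
Proof. by rewrite /m subnK // h_ge2. Qed.


Lemma c_neq0 : c != 0.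
Proof. by rewrite gt_eqF // (c_pos d4 dG). Qed.

Lemma F_eq u z : u != z -> (#|Fset u z|)%:R = t * c ^+ m.
Proof.
move=> uz; have := cardF uz; move/(congr1 (fun k : nat => k%:R : RR)).
rewrite !natrM natrX -/c -/t hm exprD expr2 mulrA.
rewrite -mulrA => E; apply: (mulIf c_neq0); apply: (mulIf c_neq0); by rewrite -mulrA E mulrA.
Qed.

Lemma n_le_2c : n <= 2 * c.
Proof.
have := c_ge dG; have := d4' d4; rewrite -/n -/c => h1 h2.
have := n_pos RR; rewrite -/n => h3.
nra.
Qed.

Lemma NA_real : (#|NA|)%:R <= c * (delta * n).
Proof.
have := NA_le; rewrite -(ler_nat RR) natr_sum => h.
apply: (le_trans h); rewrite mulrC -/c.
apply: sum_le_set => //; first by move=> x _; apply: (nonadj_le dG).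
by apply: mulr_ge0; [apply: ltW | apply: ler0n].
Qed.

Lemma D_real u z w : u != z -> goodw u z w ->
  (#|Dset u z w|)%:R <= 2 * delta * (#|Fset u z|)%:R.
Proof.
move=> uz gw; have := D_le uz gw; rewrite -(ler_nat RR) !natrM -/c => h.
have h2 : (#|NA|)%:R * (#|Fset u z|)%:R <= c * (delta * (2 * c)) * (#|Fset u z|)%:R.
  apply: ler_wpM2r; first exact: ler0n.
  apply: (le_trans NA_real); apply: ler_wpM2l; first exact: ltW (c_pos d4 dG).
  by apply: ler_wpM2l; [exact: ltW | exact: n_le_2c].
have cc : 0 < c * c by apply: mulr_gt0; exact: (c_pos d4 dG).
rewrite -(ler_pM2r cc); apply: (le_trans _ (le_trans h2 _)); first by rewrite mulrA.
by rewrite le_eqVlt; apply/orP; left; apply/eqP; ring.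
Qed.

End Final2.

Section Final3.
Local Open Scope ring_scope.
Variables (RR : realFieldType) (delta : RR).
Hypotheses (he : (1 <= ne H)%N) (d0 : 0 < delta) (d4 : delta <= 1 / 4)
  (dG : dense delta G) (b1 : (1 <= #|B|)%N).

Let n : RR := (#|G|)%:R.
Let c : RR := (#|C|)%:R.
Let t : RR := (#|R|)%:R.
Let m := (#|H| - 2)%N.
Let h : RR := (#|H|)%:R.


Lemma E_real p : p \in Pset ->
  t * c ^+ m * (1 - 2 * delta * (h * h)) <= (#|Eset p.1 p.2|)%:R.
Proof.
rewrite inE => /adj_neq pn.
have := F_le pn; rewrite -(ler_nat RR) natrD natr_sum (F_eq (RR:=RR) he d4 dG pn) => h1.
have h2 : \sum_(w | goodw p.1 p.2 w) (#|Dset p.1 p.2 w|)%:R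
           <= (2 * delta * (t * c ^+ m)) * (#|[set: H * H]|)%:R.
  apply: sum_le_set => //.
  - by move=> w gw; rewrite -(F_eq (RR:=RR) he d4 dG pn); apply: (D_real d0 d4 dG).
  - apply: mulr_ge0; first by apply: mulr_ge0 => //; apply: ltW.
    by apply: mulr_ge0; [apply: ler0n | apply: exprn_ge0; apply: ler0n].
rewrite cardsT card_prod natrM -/h in h2.
have : t * c ^+ m * (1 - 2 * delta * (h * h)) =
  t * c ^+ m - 2 * delta * (t * c ^+ m) * (h * h) by ring.
move=> ->; lra.
Qed.

Lemma T_real (q : (H * H) * H) : [&& adj q.1.1 q.1.2, q.2 != q.1.1 & q.2 != q.1.2] ->
  (#|Tset q|)%:R <= delta * t * n ^+ m.
Proof.
case/and3P => /adj_neq uz yu yz.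
have := cardT uz yu yz; move/(congr1 (fun k : nat => k%:R : RR)).
rewrite !natrM natrX -/n -/t (hm he) exprD expr2.
have eB : (#|B :\ b|)%:R = (#|B|)%:R - 1 :> RR.
  rewrite [in RHS](cardsD1 b B) bB natrD /=; ring.
rewrite eB => E.
have np := n_pos RR; rewrite -/n in np.
have hB := cardB_le dG; rewrite -/n in hB.
have nm : 0 <= n ^+ m by apply: exprn_ge0; apply: ltW.
have t0 : 0 <= t by apply: ler0n.
have E2 : (#|Tset q|)%:R * n = ((#|B|)%:R - 1) * t * n ^+ m.
  apply: (mulIf (lt0r_neq0 np)); apply: (mulIf (lt0r_neq0 np)).
  rewrite E; ring.
have E3 : ((#|B|)%:R - 1) * t * n ^+ m <= (delta * t * n ^+ m) * n.
  have : ((#|B|)%:R - 1) <= delta * n by lra.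
  move=> hh; have := ler_wpM2r (mulr_ge0 t0 nm) hh.
  have -> : delta * n * (t * n ^+ m) = delta * t * n ^+ m * n by ring.
  by rewrite mulrA.
by rewrite -(ler_pM2r np) E2.
Qed.



Lemma main_final :
  (inj H (del_vertex b))%:R + 2 * (ne H)%:R * ((#|A|)%:R - (#|B|)%:R)
    * (1 - 3 * delta * (nv H)%:R ^+ 3) * (nv G)%:R ^+ (nv H - 2)
  <= (inj H (del_vertex a))%:R :> RR.
Proof.
rewrite !inj_del /nv -/n -/m -/h.
have eAB : (#|A|)%:R - (#|B|)%:R = t :> RR by rewrite /t card_R natrB.
rewrite eAB.
have e2 : 2 * (ne H)%:R = (#|Pset|)%:R :> RR by rewrite /Pset ord_edges natrM.
rewrite e2; set P2 := (#|Pset|)%:R : RR.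
have hD := diff_id; move/(congr1 (fun k : nat => k%:R : RR)): hD; rewrite !natrD => hD.
set L := t * c ^+ m * (1 - 2 * delta * (h * h)).
have hx : L * P2 <= (#|XA :\: Y|)%:R.
  apply: le_trans (_ : \sum_(p in Pset) (#|Eset p.1 p.2|)%:R <= _).
    rewrite /P2 mulr_natr -sumr_const; apply: ler_sum => p pP.
    exact: E_real.
  by rewrite -natr_sum ler_nat; apply: E_le.
have np := n_pos RR; rewrite -/n in np.
have t0 : 0 <= t by apply: ler0n.
have nm : 0 <= n ^+ m by apply: exprn_ge0; apply: ltW.
have hy : (#|Y :\: XA|)%:R <= (delta * t * n ^+ m) * (P2 * h).
  apply: le_trans (_ : \sum_(q | [&& adj q.1.1 q.1.2, q.2 != q.1.1 & q.2 != q.1.2])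
                         (#|Tset q|)%:R <= _).
    by rewrite -natr_sum ler_nat; apply: Y_le.
  have -> : P2 * h = (#|setX Pset [set: H]|)%:R by rewrite cardsX cardsT natrM.
  apply: sum_le_set.
  - by move=> q /and3P [qa _ _]; rewrite !inE /= qa.
  - by move=> q hq; apply: T_real.
  - by apply: mulr_ge0 => //; apply: mulr_ge0 => //; apply: ltW.
have cge := c_ge dG; rewrite -/n -/c in cge.
have d4'' := d4' d4.
have cle : c <= n.
  have := cardC_eq RR; rewrite -/n -/c => ->.
  have : 0 <= (#|A|)%:R :> RR by apply: ler0n.
  have : 0 <= (#|B|)%:R :> RR by apply: ler0n.
  lra.
have CMle : c ^+ m <= n ^+ m.
  apply: lerXn2r => //; [rewrite qualifE; apply: ler0n | rewrite qualifE; apply: ler0n].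
have CMge : (1 - m%:R * (2 * delta)) * n ^+ m <= c ^+ m.
  apply: le_trans (_ : ((1 - 2 * delta) * n) ^+ m <= _).
    rewrite exprMn; apply: ler_wpM2r => //; apply: bern; have := d0; lra.
  apply: lerXn2r => //; rewrite qualifE; last exact: ler0n.
  apply: mulr_ge0; [lra | exact: ltW].
have hr : h = m%:R + 2 by rewrite /h (hm he) natrD.
have mr : 0 <= m%:R :> RR by apply: ler0n.
have P20 : 0 <= P2 by apply: ler0n.
set K := n ^+ m in nm hy CMle CMge *.
set CM := c ^+ m in L hx CMle CMge *.
set mm := m%:R in hr mr CMge *.
have poly : 0 <= 3 * h ^+ 3 - 2 * (h * h) - h - 2 * mm.
  rewrite hr; have -> : 3 * (mm + 2) ^+ 3 - 2 * ((mm + 2) * (mm + 2)) - (mm + 2) - 2 * mm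
     = 3 * mm ^+ 3 + 16 * (mm * mm) + 25 * mm + 14 by ring.
  have m3 : 0 <= mm ^+ 3 by apply: exprn_ge0.
  have m2 : 0 <= mm * mm by apply: mulr_ge0.
  lra.
have Z : (1 - 3 * delta * h ^+ 3) * K <= CM * (1 - 2 * delta * (h * h)) - delta * h * K.
  have t1 : 0 <= CM - (1 - mm * (2 * delta)) * K by lra.
  have t2 : 0 <= 2 * delta * (h * h) * (K - CM).
    apply: mulr_ge0; last by lra.
    apply: mulr_ge0; first by apply: mulr_ge0 => //; apply: ltW.
    by apply: mulr_ge0; apply: ler0n.
  have t3 : 0 <= delta * K * (3 * h ^+ 3 - 2 * (h * h) - h - 2 * mm).
    by apply: mulr_ge0 => //; apply: mulr_ge0 => //; apply: ltW.
  rewrite -subr_ge0.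
  have -> : CM * (1 - 2 * delta * (h * h)) - delta * h * K - (1 - 3 * delta * h ^+ 3) * K
     = (CM - (1 - mm * (2 * delta)) * K) + 2 * delta * (h * h) * (K - CM)
       + delta * K * (3 * h ^+ 3 - 2 * (h * h) - h - 2 * mm) by ring.
  lra.
have Z' := ler_wpM2l (mulr_ge0 P20 t0) Z.
rewrite /L in hx.
lra.
Qed.

End Final3.
End Main.

Local Open Scope ring_scope.

Theorem lemma2p3 (R : realFieldType) (H G : sgraph) (delta : R)
  (A B : {set G}) (a b : G) :
  (1 <= ne H)%N ->
  0 < delta -> delta <= 1 / 4 ->
  dense delta G ->
  [disjoint A & B] -> indep A -> indep B ->
  (#|B| <= #|A|)%N -> (1 <= #|B|)%N ->
  (forall x y, x \in A -> y \notin A -> adj x y) ->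
  (forall x y, x \in B -> y \notin B -> adj x y) ->
  a \in A -> b \in B ->
  (inj H (del_vertex a))%:R >=
    (inj H (del_vertex b))%:R
    + 2 * (ne H)%:R * ((#|A|)%:R - (#|B|)%:R)
        * (1 - 3 * delta * (nv H)%:R ^+ 3) * (nv G)%:R ^+ (nv H - 2).
Proof.
move=> he d0 d4 dG dAB iA iB leBA b1 cA cB aA bB.
by apply: main_final.
Qed.
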